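(* Let $n\in\{2,3,4\}$ and let $(d_1,\dots,d_n)$ be an unordered sequence of $n$ positive integers. (1) For $n=2$: $(d_1,d_2)$ is a regular degree sequence if and only if it is permissible, if and only if it satisfies condition $( * )$. (2) For $n=3$: $(d_1,d_2,d_3)$ is a regular degree sequence if and only if it is permissible. (3) For $n=4$: every permissible degree sequence $(d_1,d_2,d_3,d_4)$ is a regular degree sequence, except the sequences $(1,2,5,12\delta)$, $(2,2,5,12\delta)$ and $(5,2,5,12\delta)$ with $\delta$ a positive integer, which are not regular degree sequences.
   Context: Let $R=\mathbb{C}[x_1,\dots,x_n]$ with the standard grading and let the symmetric group $\mathfrak{S}_n$ act by permuting the variables; $R^{\mathfrak{S}_n}=\mathbb{C}[e_1,\dots,e_n]$, where $e_i$ is the $i$-th elementary symmetric polynomial. A sequence of $n$ homogeneous polynomials in $R$ is a (maximal) regular sequence iff its only common zero in $\mathbb{C}^n$ is the origin. An unordered sequence $(d_1,\dots,d_n)$ of positive integers is a regular degree sequence if there exists a homogeneous regular sequence $f_1,\dots,f_n$ in $R$ with every $f_i\in R^{\mathfrak{S}_n}$ and $\deg f_i=d_i$. Condition $( * )$: for every $i=1,\dots,n$, $\beta_i:=\#\{1\le j\le n: i\mid d_j\}\ge\lfloor n/i\rfloor$. Condition $(\dagger)$: for every $i=1,\dots,n$, $\#\{j: d_j\le i\}\le i$. The sequence is permissible if it satisfies both $( * )$ and $(\dagger)$. *)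

(* Defs.v *)
From HB Require Import structures.
From mathcomp Require Import all_boot all_order all_algebra.
From mathcomp Require Import Rstruct.
From mathcomp Require Import complex.
From mathcomp Require Import mpoly.
Set Implicit Arguments. Unset Strict Implicit. Unset Printing Implicit Defensive.
Import Order.TTheory GRing.Theory Num.Theory.

Definition CC : Type := complex Rdefinitions.R.

Definition cond_star (n : nat) (d : seq nat) : Prop :=
  forall i : nat, 1 <= i <= n -> n %/ i <= count (fun x => i %| x) d.

Definition cond_dagger (n : nat) (d : seq nat) : Prop :=
  forall i : nat, 1 <= i <= n -> count (fun x => x <= i) d <= i.

Definition permissible (n : nat) (d : seq nat) : Prop :=
  cond_star n d /\ cond_dagger n d.

(* (d_1,...,d_n) is a regular degree sequence: there are homogeneous
   symmetric polynomials f_1,...,f_n in C[x_1,...,x_n], deg f_j = d_j,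
   forming a regular sequence, i.e. whose only common zero in C^n is 0. *)
Definition regular_degree_seq (n : nat) (d : seq nat) : Prop :=
  exists f : 'I_n -> {mpoly CC[n]},
    (forall j : 'I_n, f j \is symmetric) /\
    (forall j : 'I_n, f j != 0%R /\ f j \is (nth 0%N d j).-homog) /\
    (forall x : 'I_n -> CC, (forall j : 'I_n, (f j).@[x] = 0%R) -> forall k, x k = 0%R).

Definition exceptional4 (d : seq nat) : Prop :=
  exists delta : nat, 0 < delta /\
    (perm_eq d [:: 1; 2; 5; 12 * delta] \/
     perm_eq d [:: 2; 2; 5; 12 * delta] \/
     perm_eq d [:: 5; 2; 5; 12 * delta]).

(* Main.v *)
Require Import Defs.
From HB Require Import structures.
From mathcomp Require Import all_boot all_order all_algebra.
From mathcomp Require Import Rstruct complex mpoly closed_field perm zify.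
Set Implicit Arguments. Unset Strict Implicit. Unset Printing Implicit Defensive.
Import Order.TTheory GRing.Theory Num.Theory.

Section Gen.
Local Open Scope ring_scope.
Variable n : nat.

Definition SS := [tuple mesym n CC i.+1 | i < n].
Definition ev (x : 'I_n -> CC) : 'I_n -> CC := fun i => (mesym n CC i.+1).@[x].

Lemma evalS (t : {mpoly CC[n]}) x : (t \mPo SS).@[x] = t.@[ev x].
Proof. by rewrite comp_mpoly_meval; apply: meval_eq => i; rewrite tnth_mktuple. Qed.

Lemma meval_vanish (t : {mpoly CC[n]}) (v : 'I_n -> CC) :
  (forall m, m \in msupp t -> exists i, (0 < m i)%N /\ v i = 0) -> t.@[v] = 0.
Proof.
move=> H; rewrite mevalE big_seq big1 // => m /H [i [Hi Hv]].
by rewrite (bigD1 i) //= Hv expr0n gtn_eqF // !mul0r mulr0.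
Qed.

Lemma vanW (t : {mpoly CC[n]}) D v : t \is D.-homog for mnmwgt ->
  (forall m : 'X_{1..n}, mnmwgt m = D -> exists i, (0 < m i)%N /\ v i = 0) -> t.@[v] = 0.
Proof. by move=> /dhomogP Ht H; apply: meval_vanish => m /Ht /H. Qed.

Lemma ev_zero i : ev (fun _ => 0) i = 0.
Proof.
apply: meval_vanish => m Hm.
have /dhomogP/(_ m Hm) := dhomog_mesym n CC i.+1.
move=> Hs.
have : (0 < mdeg m)%N by rewrite Hs.
rewrite mdegE.
case: (boolP [exists j, 0 < m j]%N).
  by move/existsP=> [j Hj] _; exists j.
move/existsPn=> Hn; rewrite big1 // => j _.
by move: (Hn j); rewrite lt0n negbK => /eqP.
Qed.

Lemma ev0 x : (forall i, ev x i = 0) -> forall k, x k = 0.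
Proof.
move=> H k.
pose cs := [tuple x i | i < n].
pose P := \prod_(c <- cs) ('X - c%:P).
have szP : size P = n.+1 by rewrite size_prod_XsubC size_tuple.
have PE : P = 'X^n.
  apply/polyP => i; rewrite coefXn.
  case: (ltngtP i n) => Hi.
  - have Hk : (n - i < n.+1)%N by lia.
    have := mroots_coeff cs (Ordinal Hk) => /=.
    have -> : (n - (n - i) = i)%N by lia.
    move=> ->.
    have -> : (n - i)%N = (n - i - 1).+1 by lia.
    have Hj : (n - i - 1 < n)%N by lia.
    have := H (Ordinal Hj) => /=; rewrite /ev /= => E.
    rewrite (_ : (mesym n CC (n - i - 1).+1).@[tnth cs] = 0) ?mulr0 //.
    by rewrite -E; apply: meval_eq => j; rewrite tnth_mktuple.
  - by rewrite nth_default // szP.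
  - rewrite Hi; have := monicP (monic_prod_XsubC cs predT id).
    by rewrite /lead_coef -/P szP.
have : root P (x k) by rewrite root_prod_XsubC; apply/tnthP; exists k; rewrite tnth_mktuple.
rewrite PE rootE hornerXn expf_eq0 => /andP [_ /eqP] //.
Qed.


Lemma ev_surj (c : 'I_n -> CC) : exists x, forall i, ev x i = c i.
Proof.
pose cn (k : nat) : CC := odflt 0 (omap c (insub k)).
have cnE (i : 'I_n) : cn i = c i.
  rewrite /cn; case: insubP => [j _ Hj|]; last by rewrite ltn_ord.
  by rewrite /=; congr (c _); apply: val_inj.
pose a (j : nat) : CC := if (n - j)%N is k.+1 then (-1) ^+ k.+1 * cn k else 1.
pose P := \poly_(j < n.+1) a j.
have Pn : P`_n = 1 by rewrite coef_poly ltnSn /a subnn.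
have szP : size P = n.+1 by rewrite size_poly_eq //= /a subnn oner_eq0.
have [r Pr] := closed_field_poly_normal P.
have lcP : lead_coef P = 1 by rewrite /lead_coef szP.
rewrite lcP scale1r in Pr.
have szr : size r == n by rewrite -eqSS -szP Pr size_prod_XsubC.
pose cs := Tuple szr.
exists (tnth cs) => i.
have Hk : (i.+1 < n.+1)%N by rewrite ltnS ltn_ord.
have := mroots_coeff cs (Ordinal Hk) => /=.
have -> : \prod_(c0 <- cs) ('X - c0%:P) = P by rewrite Pr.
rewrite coef_poly.
have -> : (n - i.+1 < n.+1)%N by lia.
rewrite /a.
have -> : (n - (n - i.+1))%N = i.+1 by have := ltn_ord i; lia.
rewrite cnE => /(mulfI (negbT (signr_eq0 _ _))) ->.
by [].
Qed.


Lemma meval_scale (t : {mpoly CC[n]}) D v mu :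
  t \is D.-homog for mnmwgt ->
  t.@[fun i => mu ^+ i.+1 * v i] = mu ^+ D * t.@[v].
Proof.
move=> /dhomogP H; rewrite !mevalE mulr_sumr big_seq [RHS]big_seq.
apply: eq_bigr => m Hm; rewrite mulrCA; congr (_ * _).
under eq_bigr do rewrite exprMn -exprM.
rewrite big_split /= prodrXr; congr (_ ^+ _ * _).
by rewrite -(H m Hm) /mnmwgt; apply: eq_bigr => i _; rewrite mulnC.
Qed.

Definition mline (t : {mpoly CC[n]}) (v : 'I_n -> CC) (a : 'I_n) : {poly CC} :=
  \sum_(m <- msupp t) (t@_m * \prod_(i | i != a) v i ^+ m i) *: 'X^(m a).

Lemma mlineE t v a z : (mline t v a).[z] = t.@[fun i => if i == a then z else v i].
Proof.
rewrite /mline horner_sum mevalE; apply: eq_bigr => m _.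
rewrite hornerZ hornerXn [X in _ = _ * X](bigD1 a) //= eqxx.
rewrite -mulrA; congr (_ * _); rewrite mulrC; congr (_ * _).
by apply: eq_bigr => i /negbTE ->.
Qed.

Lemma size1_const (p : {poly CC}) : size p = 1%N -> (p`_0 != 0) /\ forall z, p.[z] = p`_0.
Proof.
move=> Hs; have Hp : p = (p`_0)%:P by apply: size1_polyC; rewrite Hs.
split; last by move=> z; rewrite Hp hornerC -Hp.
apply/negP => /eqP H0; move: Hs; rewrite Hp H0 size_poly0 //.
Qed.

Definition vab (a b : 'I_n) (u w : CC) : 'I_n -> CC :=
  fun i => if i == a then u else if i == b then w else 0.

Lemma WZ (t : {mpoly CC[n]}) D a b : a != b -> t \is D.-homog for mnmwgt -> (0 < D)%N ->
  exists u w : CC, (u != 0 \/ w != 0) /\ t.@[vab a b u w] = 0.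
Proof.
move=> nab Ht D0.
pose G := mline t (vab a b 0 1) a.
pose H := mline t (vab a b 1 0) b.
have GE z : G.[z] = t.@[vab a b z 1].
  rewrite mlineE; apply: meval_eq => i; rewrite /vab.
  by case: (i == a).
have HE z : H.[z] = t.@[vab a b 1 z].
  rewrite mlineE; apply: meval_eq => i; rewrite /vab.
  case: eqP => [->|]; first by rewrite eq_sym (negbTE nab).
  by case: (i == a).
case: (eqVneq (size G) 1%N) => [/size1_const [_ GG]|/closed_rootP [z Hz]]; last first.
  by exists z, 1; split; [right; exact: oner_neq0 | rewrite -GE; apply/eqP].
case: (eqVneq (size H) 1%N) => [/size1_const [H0 HH]|/closed_rootP [z Hz]]; last first.
  by exists 1, z; split; [left; exact: oner_neq0 | rewrite -HE; apply/eqP].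
exfalso.
have mu0 : (2 : CC) != 0 by rewrite pnatr_eq0.
have E1 : G.[1] = H.[1] by rewrite GE HE.
have E2 : G.[2 ^+ a.+1] = 2 ^+ D * H.[(2 ^+ b.+1)^-1].
  rewrite GE HE -meval_scale //; apply: meval_eq => i; rewrite /vab.
  case: eqP => [->|]; first by rewrite mulr1.
  case: eqP => [->|_ _]; last by rewrite mulr0.
  by rewrite mulfV // expf_eq0 negb_and mu0 orbT.
rewrite !GG !HH in E1 E2.
move: E2; rewrite E1 -{1}(mul1r H`_0) => /(mulIf H0) /eqP.
move=> /eqP H2.
have : ((2 ^ D)%N%:R : CC) == 1%:R by rewrite natrX -H2.
rewrite eqr_nat => /eqP {}H2.
have : (2 ^ D >= 2)%N by rewrite -{1}(expn1 2) leq_pexp2l.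
by rewrite H2.
Qed.


Lemma build (d : seq nat) (t : 'I_n -> {mpoly CC[n]}) :
  (forall j, t j \is (nth 0%N d j).-homog for mnmwgt) ->
  (forall j, exists v, (t j).@[v] != 0) ->
  (forall v, (forall j, (t j).@[v] = 0) -> forall i, v i = 0) ->
  regular_degree_seq n d.
Proof.
move=> Hh Hnz Hz; exists (fun j => t j \mPo SS); split; [|split].
- move=> j; apply: mcomp_sym => i.
  by rewrite -(tnth_nth 0) tnth_mktuple mesym_sym.
- move=> j; split; last by rewrite -mwmwgt_homogE.
  have [v Hv] := Hnz j; have [x Hx] := ev_surj v.
  apply/eqP => H0; move: Hv.
  by rewrite -(meval_eq _ Hx) -evalS H0 meval0 eqxx.
- move=> x Hx; apply: ev0; apply: Hz => j; rewrite -evalS; exact: Hx j.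
Qed.

Lemma reg_rep d : regular_degree_seq n d ->
  exists t : 'I_n -> {mpoly CC[n]},
    (forall j, t j \is (nth 0%N d j).-homog for mnmwgt) /\
    (forall v, (forall j, (t j).@[v] = 0) -> forall i, v i = 0).
Proof.
case=> f [Hs [Hh Hr]].
exists (fun j => sval (sym_fundamental_homog (Hs j) (proj2 (Hh j)))); split.
  by move=> j; case: (sym_fundamental_homog _ _) => t [].
move=> v Hv i; have [x Hx] := ev_surj v.
have Hx0 : forall k, x k = 0.
  apply: Hr => j; have := Hv j.
  case: (sym_fundamental_homog _ _) => t [Ht _] /=.
  by rewrite -Ht evalS (meval_eq _ Hx).
rewrite -Hx -(ev_zero i); apply: meval_eq => k; exact: Hx0.
Qed.

End Gen.

Lemma regular_perm n (d d' : seq nat) : size d = n -> perm_eq d' d ->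
  regular_degree_seq n d -> regular_degree_seq n d'.
Proof.
move=> Hs; have Hs' : size d == n by apply/eqP.
pose tt := Tuple Hs'.
move=> /(@tuple_permP _ _ _ tt) [p Hp] [f [Hsy [Hh Hr]]].
have nthE (j : 'I_n) : nth 0%N d' j = nth 0%N d (p j).
  by rewrite Hp -tnth_nth tnth_mktuple (tnth_nth 0%N).
exists (fun j => f (p j)); split; [|split].
- by move=> j; exact: Hsy.
- by move=> j; rewrite nthE; exact: Hh.
- move=> x Hx; apply: Hr => j; have := Hx (p^-1 j)%g; by rewrite permKV.
Qed.


Section Four.
Local Open Scope ring_scope.

Definition O0 : 'I_4 := @Ordinal 4 0 isT.
Definition O1 : 'I_4 := @Ordinal 4 1 isT.
Definition O2 : 'I_4 := @Ordinal 4 2 isT.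
Definition O3 : 'I_4 := @Ordinal 4 3 isT.

Lemma forall4 (P : 'I_4 -> Prop) : P O0 -> P O1 -> P O2 -> P O3 -> forall i, P i.
Proof.
move=> h0 h1 h2 h3 [[|[|[|[|k]]]] Hk] //.
- by have -> : Ordinal Hk = O0 by apply: val_inj.
- by have -> : Ordinal Hk = O1 by apply: val_inj.
- by have -> : Ordinal Hk = O2 by apply: val_inj.
- by have -> : Ordinal Hk = O3 by apply: val_inj.
Qed.

Lemma all4 (v : 'I_4 -> CC) : v O0 = 0 -> v O1 = 0 -> v O2 = 0 -> v O3 = 0 ->
  forall i, v i = 0.
Proof. exact: forall4. Qed.

Lemma sum4 (F : 'I_4 -> nat) : (\sum_(i < 4) F i = F O0 + F O1 + F O2 + F O3)%N.
Proof.
rewrite !big_ord_recl big_ord0 addn0 !addnA.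
by repeat (congr (_ + _)); congr F; apply: val_inj.
Qed.

Lemma wgt4 (m : 'X_{1..4}) : mnmwgt m = (m O0 + m O1 * 2 + m O2 * 3 + m O3 * 4)%N.
Proof. by rewrite /mnmwgt sum4 muln1. Qed.

End Four.

Section Homog.
Local Open Scope ring_scope.
Variable n : nat.

Lemma hX (i : 'I_n) k D : D = (i.+1 * k)%N -> ('X_i : {mpoly CC[n]}) ^+ k \is D.-homog for mnmwgt.
Proof.
move=> ->; apply: dhomogMn; rewrite dhomogX; apply/eqP; exact: mnmwgt1.
Qed.

Lemma hM (p q : {mpoly CC[n]}) D1 D2 D : D = (D1 + D2)%N ->
  p \is D1.-homog for mnmwgt -> q \is D2.-homog for mnmwgt -> p * q \is D.-homog for mnmwgt.
Proof. by move=> -> hp hq; apply: dhomogM. Qed.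

Lemma hD (p q : {mpoly CC[n]}) D :
  p \is D.-homog for mnmwgt -> q \is D.-homog for mnmwgt -> p + q \is D.-homog for mnmwgt.
Proof. by move=> hp hq; apply: dhomogD. Qed.

Lemma pw0 (z : CC) k : z ^+ k = 0 -> (0 < k)%N /\ z = 0.
Proof. by move/eqP; rewrite expf_eq0 => /andP [-> /eqP]. Qed.

Lemma pz (z : CC) k : (0 < k)%N -> z = 0 -> z ^+ k = 0.
Proof. by move=> Hk ->; rewrite expr0n gtn_eqF. Qed.

Lemma bin0 (z w : CC) p q : (0 < p)%N -> (0 < q)%N -> z ^+ p + w ^+ q = 0 -> z = 0 -> w = 0.
Proof. by move=> p0 q0 H z0; move: H; rewrite z0 expr0n gtn_eqF // add0r => /pw0 []. Qed.

Lemma bin0' (z w : CC) p q : (0 < p)%N -> (0 < q)%N -> z ^+ p + w ^+ q = 0 -> w = 0 -> z = 0.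
Proof. by move=> p0 q0 H w0; move: H; rewrite w0 expr0n (gtn_eqF q0) addr0 => /pw0 []. Qed.

Lemma mon0 (z w : CC) p q : z ^+ p * w ^+ q = 0 -> z = 0 \/ w = 0.
Proof. by move/eqP; rewrite mulf_eq0 => /orP [] /eqP /pw0 [] _ ->; [left|right]. Qed.

Lemma mon0' (z w : CC) p q : (0 < p + q)%N -> z = 0 -> w = 0 -> z ^+ p * w ^+ q = 0.
Proof.
move=> pq -> ->; rewrite !expr0n; case: p pq => [|p] /=; last by rewrite mul0r.
by move=> q0; rewrite gtn_eqF // mulr0.
Qed.

End Homog.


Section Fams4.
Local Open Scope ring_scope.

Local Notation X i := ('X_i : {mpoly CC[4]}).

Lemma ev_ones (t : 'I_4 -> nat) : (X O0 ^+ t O0).@[fun _ => 1] = 1.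
Proof. by rewrite rmorphXn /= mevalXU expr1n. Qed.

Lemma famM4 a b c e : (0 < a)%N -> (0 < b)%N -> (2 %| b)%N -> (0 < c)%N -> (3 %| c)%N ->
  (0 < e)%N -> (4 %| e)%N -> regular_degree_seq 4 [:: a; b; c; e].
Proof.
move=> a0 b0 b2 c0 c3 e0 e4.
apply: (build (t := fun j : 'I_4 => nth 0 [:: X O0 ^+ a; X O1 ^+ (b %/ 2);
                                             X O2 ^+ (c %/ 3); X O3 ^+ (e %/ 4)] j)).
- case=> [[|[|[|[|k]]]] Hk] //=; apply: hX => /=; lia.
- case=> [[|[|[|[|k]]]] Hk] //=; exists (fun _ => 1);
  by rewrite rmorphXn /= mevalXU expr1n oner_neq0.
- move=> v Hz; apply: all4.
  + by have := Hz O0; rewrite /= rmorphXn /= mevalXU => /pw0 [].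
  + by have := Hz O1; rewrite /= rmorphXn /= mevalXU => /pw0 [].
  + by have := Hz O2; rewrite /= rmorphXn /= mevalXU => /pw0 [].
  + by have := Hz O3; rewrite /= rmorphXn /= mevalXU => /pw0 [].
Qed.


Lemma famQ4 a b x y e : (0 < a)%N -> (0 < b)%N -> (2 %| b)%N -> (0 < x + y)%N ->
  (0 < e)%N -> (12 %| e)%N -> regular_degree_seq 4 [:: a; b; 3 * x + 4 * y; e]%N.
Proof.
move=> a0 b0 b2 xy e0 e12.
apply: (build (t := fun j : 'I_4 => nth 0 [:: X O0 ^+ a; X O1 ^+ (b %/ 2);
                      X O2 ^+ x * X O3 ^+ y; X O2 ^+ (e %/ 3) + X O3 ^+ (e %/ 4)] j)).
- case=> [[|[|[|[|k]]]] Hk] //=.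
  + by apply: hX => /=; lia.
  + by apply: hX => /=; lia.
  + by apply: (hM (D1 := (3 * x)%N) (D2 := (4 * y)%N)) => //; apply: hX.
  + by apply: hD; apply: hX => /=; lia.
- case=> [[|[|[|[|k]]]] Hk] //=.
  + by exists (fun _ => 1); rewrite rmorphXn /= mevalXU expr1n oner_neq0.
  + by exists (fun _ => 1); rewrite rmorphXn /= mevalXU expr1n oner_neq0.
  + by exists (fun _ => 1); rewrite mevalM !rmorphXn /= !mevalXU !expr1n mulr1 oner_neq0.
  + exists (fun i => if i == O3 then 0 else 1).
    rewrite mevalD !rmorphXn /= !mevalXU /= expr1n expr0n.
    have -> : (e %/ 4 == 0)%N = false by apply/negbTE; lia.
    by rewrite addr0 oner_neq0.
- move=> v Hz.
  have h0 := Hz O0; have h1 := Hz O1; have h2 := Hz O2; have h3 := Hz O3.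
  rewrite /= ?mevalD ?mevalM !rmorphXn /= !mevalXU in h0 h1 h2 h3.
  have e3 : (0 < e %/ 3)%N by lia.
  have e4 : (0 < e %/ 4)%N by lia.
  have [v2 v3] : v O2 = 0 /\ v O3 = 0.
    case: (mon0 h2) => H; first by split => //; exact: bin0 e3 e4 h3 H.
    by split => //; exact: bin0' e3 e4 h3 H.
  apply: all4 => //; [by move/pw0: h0 => [] | by move/pw0: h1 => []].
Qed.

Lemma famP4 a u x y e : (0 < a)%N -> (0 < x + y)%N -> (2 %| 3 * x + 4 * y)%N ->
  (0 < e)%N -> (12 %| e)%N -> regular_degree_seq 4 [:: a; 2 * u + 3; 3 * x + 4 * y; e]%N.
Proof.
move=> a0 xy c2 e0 e12.
set c := (3 * x + 4 * y)%N.
apply: (build (t := fun j : 'I_4 => nth 0 [:: X O0 ^+ a; X O1 ^+ u * X O2 ^+ 1;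
                      X O1 ^+ (c %/ 2) + X O2 ^+ x * X O3 ^+ y;
                      X O2 ^+ (e %/ 3) + X O3 ^+ (e %/ 4)] j)).
- case=> [[|[|[|[|k]]]] Hk] //=.
  + by apply: hX => /=; lia.
  + by apply: (hM (D1 := (2 * u)%N) (D2 := 3%N)) => //; apply: hX.
  + apply: hD; first by apply: hX => /=; rewrite /c; lia.
    by apply: (hM (D1 := (3 * x)%N) (D2 := (4 * y)%N)) => //; apply: hX.
  + by apply: hD; apply: hX => /=; lia.
- case=> [[|[|[|[|k]]]] Hk] //=.
  + by exists (fun _ => 1); rewrite rmorphXn /= mevalXU expr1n oner_neq0.
  + by exists (fun _ => 1); rewrite mevalM !rmorphXn /= !mevalXU !expr1n mulr1 oner_neq0.
  + exists (fun i => if (i == O2) || (i == O3) then 0 else 1).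
    rewrite mevalD mevalM !rmorphXn /= !mevalXU /= expr1n mon0' //.
    by rewrite addr0 oner_neq0.
  + exists (fun i => if i == O3 then 0 else 1).
    rewrite mevalD !rmorphXn /= !mevalXU /= expr1n expr0n.
    have -> : (e %/ 4 == 0)%N = false by apply/negbTE; lia.
    by rewrite addr0 oner_neq0.
- move=> v Hz.
  have h0 := Hz O0; have h1 := Hz O1; have h2 := Hz O2; have h3 := Hz O3.
  rewrite /= ?mevalD ?mevalM !rmorphXn /= !mevalXU in h0 h1 h2 h3.
  have e3 : (0 < e %/ 3)%N by lia.
  have e4 : (0 < e %/ 4)%N by lia.
  have c2' : (0 < c %/ 2)%N by rewrite /c; lia.
  have [v1 [v2 v3]] : v O1 = 0 /\ v O2 = 0 /\ v O3 = 0.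
    case: (mon0 h1) => H.
    + have G : v O2 ^+ x * v O3 ^+ y = 0.
        by move: h2; rewrite H expr0n (gtn_eqF c2') add0r.
      case: (mon0 G) => H'.
      * by split => //; split => //; exact: bin0 e3 e4 h3 H'.
      * by split => //; split => //; exact: bin0' e3 e4 h3 H'.
    + have H3 : v O3 = 0 by exact: bin0 e3 e4 h3 H.
      have G : v O2 ^+ x * v O3 ^+ y = 0 by apply: mon0'.
      by split => //; move: h2; rewrite G addr0 => /pw0 [].
  by apply: all4 => //; move/pw0: h0 => [].
Qed.

Lemma famR4 a u c e : (0 < a)%N -> (0 < c)%N -> (6 %| c)%N ->
  (0 < e)%N -> (4 %| e)%N -> regular_degree_seq 4 [:: a; 2 * u + 3; c; e]%N.
Proof.
move=> a0 c0 c6 e0 e4.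
apply: (build (t := fun j : 'I_4 => nth 0 [:: X O0 ^+ a; X O1 ^+ u * X O2 ^+ 1;
                      X O1 ^+ (c %/ 2) + X O2 ^+ (c %/ 3); X O3 ^+ (e %/ 4)] j)).
- case=> [[|[|[|[|k]]]] Hk] //=.
  + by apply: hX => /=; lia.
  + by apply: (hM (D1 := (2 * u)%N) (D2 := 3%N)) => //; apply: hX.
  + by apply: hD; apply: hX => /=; lia.
  + by apply: hX => /=; lia.
- case=> [[|[|[|[|k]]]] Hk] //=.
  + by exists (fun _ => 1); rewrite rmorphXn /= mevalXU expr1n oner_neq0.
  + by exists (fun _ => 1); rewrite mevalM !rmorphXn /= !mevalXU !expr1n mulr1 oner_neq0.
  + exists (fun i => if i == O2 then 0 else 1).
    rewrite mevalD !rmorphXn /= !mevalXU /= expr1n expr0n.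
    have -> : (c %/ 3 == 0)%N = false by apply/negbTE; lia.
    by rewrite addr0 oner_neq0.
  + by exists (fun _ => 1); rewrite rmorphXn /= mevalXU expr1n oner_neq0.
- move=> v Hz.
  have h0 := Hz O0; have h1 := Hz O1; have h2 := Hz O2; have h3 := Hz O3.
  rewrite /= ?mevalD ?mevalM !rmorphXn /= !mevalXU in h0 h1 h2 h3.
  have c2 : (0 < c %/ 2)%N by lia.
  have c3 : (0 < c %/ 3)%N by lia.
  have [v1 v2] : v O1 = 0 /\ v O2 = 0.
    case: (mon0 h1) => H.
    + by split => //; exact: bin0 c2 c3 h2 H.
    + by split => //; exact: bin0' c2 c3 h2 H.
  apply: all4 => //; [by move/pw0: h0 => [] | by move/pw0: h3 => []].
Qed.

End Fams4.

Section Exc4.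
Local Open Scope ring_scope.

Lemma exc_notreg a D : [|| a == 1%N, a == 2%N | a == 5%N] -> (12 %| D)%N -> (0 < D)%N ->
  ~ regular_degree_seq 4 [:: a; 2; 5; D]%N.
Proof.
move=> Ha HD D0 /reg_rep [t [Ht Hz]].
have [u [w [Huw H3]]] := WZ (a := O2) (b := O3) isT (Ht O3) D0.
pose v := vab O2 O3 u w.
have Hv : forall j, (t j).@[v] = 0.
  have van (j : 'I_4) : [|| nth 0%N [:: a; 2; 5; D]%N j == 1%N,
                           nth 0%N [:: a; 2; 5; D]%N j == 2%N | nth 0%N [:: a; 2; 5; D]%N j == 5%N] ->
                        (t j).@[v] = 0.
    move=> Hj; apply: (vanW (Ht j)) => m; rewrite wgt4 => Hm.
    case: (posnP (m O0)) => H0; last by exists O0.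
    case: (posnP (m O1)) => H1; last by exists O1.
    exfalso; move: Hj; rewrite -Hm H0 H1 /=; lia.
  by apply: forall4 => //; apply: van => //=.
have := Hz v Hv.
move=> Hv0; have u0 := Hv0 O2; have w0 := Hv0 O3.
rewrite /v /vab /= in u0 w0.
by case: Huw => /eqP; [rewrite u0 | rewrite w0].
Qed.

End Exc4.

Section Three.
Local Open Scope ring_scope.

Definition P0 : 'I_3 := @Ordinal 3 0 isT.
Definition P1 : 'I_3 := @Ordinal 3 1 isT.
Definition P2 : 'I_3 := @Ordinal 3 2 isT.

Lemma forall3 (P : 'I_3 -> Prop) : P P0 -> P P1 -> P P2 -> forall i, P i.
Proof.
move=> h0 h1 h2 [[|[|[|k]]] Hk] //.
- by have -> : Ordinal Hk = P0 by apply: val_inj.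
- by have -> : Ordinal Hk = P1 by apply: val_inj.
- by have -> : Ordinal Hk = P2 by apply: val_inj.
Qed.

Lemma sum3 (F : 'I_3 -> nat) : (\sum_(i < 3) F i = F P0 + F P1 + F P2)%N.
Proof.
rewrite !big_ord_recl big_ord0 addn0 !addnA.
by repeat (congr (_ + _)); congr F; apply: val_inj.
Qed.

Lemma wgt3 (m : 'X_{1..3}) : mnmwgt m = (m P0 + m P1 * 2 + m P2 * 3)%N.
Proof. by rewrite /mnmwgt sum3 muln1. Qed.

Local Notation X i := ('X_i : {mpoly CC[3]}).

Lemma famM3 a b c : (0 < a)%N -> (0 < b)%N -> (2 %| b)%N -> (0 < c)%N -> (3 %| c)%N ->
  regular_degree_seq 3 [:: a; b; c].
Proof.
move=> a0 b0 b2 c0 c3.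
apply: (build (t := fun j : 'I_3 => nth 0 [:: X P0 ^+ a; X P1 ^+ (b %/ 2);
                                             X P2 ^+ (c %/ 3)] j)).
- case=> [[|[|[|k]]] Hk] //=; apply: hX => /=; lia.
- case=> [[|[|[|k]]] Hk] //=; exists (fun _ => 1);
  by rewrite rmorphXn /= mevalXU expr1n oner_neq0.
- move=> v Hz; apply: forall3.
  + by have := Hz P0; rewrite /= rmorphXn /= mevalXU => /pw0 [].
  + by have := Hz P1; rewrite /= rmorphXn /= mevalXU => /pw0 [].
  + by have := Hz P2; rewrite /= rmorphXn /= mevalXU => /pw0 [].
Qed.

Lemma famP3 a u c : (0 < a)%N -> (0 < c)%N -> (6 %| c)%N ->
  regular_degree_seq 3 [:: a; 2 * u + 3; c]%N.
Proof.
move=> a0 c0 c6.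
apply: (build (t := fun j : 'I_3 => nth 0 [:: X P0 ^+ a; X P1 ^+ u * X P2 ^+ 1;
                      X P1 ^+ (c %/ 2) + X P2 ^+ (c %/ 3)] j)).
- case=> [[|[|[|k]]] Hk] //=.
  + by apply: hX => /=; lia.
  + by apply: (hM (D1 := (2 * u)%N) (D2 := 3%N)) => //; apply: hX.
  + by apply: hD; apply: hX => /=; lia.
- case=> [[|[|[|k]]] Hk] //=.
  + by exists (fun _ => 1); rewrite rmorphXn /= mevalXU expr1n oner_neq0.
  + by exists (fun _ => 1); rewrite mevalM !rmorphXn /= !mevalXU !expr1n mulr1 oner_neq0.
  + exists (fun i => if i == P2 then 0 else 1).
    rewrite mevalD !rmorphXn /= !mevalXU /= expr1n expr0n.
    have -> : (c %/ 3 == 0)%N = false by apply/negbTE; lia.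
    by rewrite addr0 oner_neq0.
- move=> v Hz.
  have h0 := Hz P0; have h1 := Hz P1; have h2 := Hz P2.
  rewrite /= ?mevalD ?mevalM !rmorphXn /= !mevalXU in h0 h1 h2.
  have c2 : (0 < c %/ 2)%N by lia.
  have c3 : (0 < c %/ 3)%N by lia.
  have [v1 v2] : v P1 = 0 /\ v P2 = 0.
    case: (mon0 h1) => H.
    + by split => //; exact: bin0 c2 c3 h2 H.
    + by split => //; exact: bin0' c2 c3 h2 H.
  by apply: forall3 => //; move/pw0: h0 => [].
Qed.

Lemma noeven3 d : (forall j : 'I_3, ~~ (2 %| nth 0%N d j))%N -> ~ regular_degree_seq 3 d.
Proof.
move=> Hd /reg_rep [t [Ht Hz]].
pose v : 'I_3 -> CC := fun i => if i == P1 then 1 else 0.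
have : v P1 = 0.
  apply: Hz => j; apply: (vanW (Ht j)) => m; rewrite wgt3 => Hm.
  case: (posnP (m P0)) => H0; last by exists P0.
  case: (posnP (m P2)) => H2; last by exists P2.
  by exfalso; move: (Hd j); rewrite -Hm H0 H2; lia.
by move/eqP; rewrite /v /= oner_eq0.
Qed.

Lemma nothree3 d : (forall j : 'I_3, ~~ (3 %| nth 0%N d j))%N -> ~ regular_degree_seq 3 d.
Proof.
move=> Hd /reg_rep [t [Ht Hz]].
pose v : 'I_3 -> CC := fun i => if i == P2 then 1 else 0.
have : v P2 = 0.
  apply: Hz => j; apply: (vanW (Ht j)) => m; rewrite wgt3 => Hm.
  case: (posnP (m P0)) => H0; last by exists P0.
  case: (posnP (m P1)) => H1; last by exists P1.
  by exfalso; move: (Hd j); rewrite -Hm H0 H1; lia.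
by move/eqP; rewrite /v /= oner_eq0.
Qed.

Lemma ones3 d (j0 : 'I_3) : (forall j : 'I_3, j != j0 -> nth 0%N d j = 1%N) ->
  (0 < nth 0%N d j0)%N -> ~ regular_degree_seq 3 d.
Proof.
move=> Hd D0 /reg_rep [t [Ht Hz]].
have [u [w [Huw H3]]] := WZ (a := P1) (b := P2) isT (Ht j0) D0.
pose v := vab P1 P2 u w.
have Hv : forall j, (t j).@[v] = 0.
  move=> j; case: (eqVneq j j0) => [->|Hj] //.
  apply: (vanW (Ht j)) => m; rewrite wgt3 (Hd j Hj) => Hm.
  exists P0; split => //; lia.
have Hv0 := Hz v Hv; have u0 := Hv0 P1; have w0 := Hv0 P2.
rewrite /v /vab /= in u0 w0.
by case: Huw => /eqP; [rewrite u0 | rewrite w0].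
Qed.

End Three.

Section Two.
Local Open Scope ring_scope.

Definition Q0 : 'I_2 := @Ordinal 2 0 isT.
Definition Q1 : 'I_2 := @Ordinal 2 1 isT.

Lemma forall2 (P : 'I_2 -> Prop) : P Q0 -> P Q1 -> forall i, P i.
Proof.
move=> h0 h1 [[|[|k]] Hk] //.
- by have -> : Ordinal Hk = Q0 by apply: val_inj.
- by have -> : Ordinal Hk = Q1 by apply: val_inj.
Qed.

Lemma sum2 (F : 'I_2 -> nat) : (\sum_(i < 2) F i = F Q0 + F Q1)%N.
Proof.
rewrite !big_ord_recl big_ord0 addn0.
by repeat (congr (_ + _)); congr F; apply: val_inj.
Qed.

Lemma wgt2 (m : 'X_{1..2}) : mnmwgt m = (m Q0 + m Q1 * 2)%N.
Proof. by rewrite /mnmwgt sum2 muln1. Qed.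

Local Notation X i := ('X_i : {mpoly CC[2]}).

Lemma famM2 a b : (0 < a)%N -> (0 < b)%N -> (2 %| b)%N -> regular_degree_seq 2 [:: a; b].
Proof.
move=> a0 b0 b2.
apply: (build (t := fun j : 'I_2 => nth 0 [:: X Q0 ^+ a; X Q1 ^+ (b %/ 2)] j)).
- case=> [[|[|k]] Hk] //=; apply: hX => /=; lia.
- case=> [[|[|k]] Hk] //=; exists (fun _ => 1);
  by rewrite rmorphXn /= mevalXU expr1n oner_neq0.
- move=> v Hz; apply: forall2.
  + by have := Hz Q0; rewrite /= rmorphXn /= mevalXU => /pw0 [].
  + by have := Hz Q1; rewrite /= rmorphXn /= mevalXU => /pw0 [].
Qed.

Lemma noeven2 d : (forall j : 'I_2, ~~ (2 %| nth 0%N d j))%N -> ~ regular_degree_seq 2 d.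
Proof.
move=> Hd /reg_rep [t [Ht Hz]].
pose v : 'I_2 -> CC := fun i => if i == Q1 then 1 else 0.
have : v Q1 = 0.
  apply: Hz => j; apply: (vanW (Ht j)) => m; rewrite wgt2 => Hm.
  case: (posnP (m Q0)) => H0; last by exists Q0.
  by exfalso; move: (Hd j); rewrite -Hm H0; lia.
by move/eqP; rewrite /v /= oner_eq0.
Qed.

End Two.
Definition kap (x : nat) : nat := if x < 18 then x else 6 + (x - 6) %% 12.
Lemma kapD k x : k \in [:: 2; 3; 4; 6; 12] -> (k %| kap x) = (k %| x).
Proof.
rewrite /kap !inE => Hk; case: ifP => Hx //.
by apply/idP/idP; case/orP: Hk => [/eqP->|/orP [/eqP->|/orP [/eqP->|/orP [/eqP->|/eqP->]]]] //; lia.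
Qed.
Lemma kapE c x : c <= 5 -> (kap x == c) = (x == c).
Proof. rewrite /kap => Hc; case: ifP => Hx //; apply/idP/idP => /eqP; lia. Qed.
Lemma kapL c x : c <= 5 -> (kap x <= c) = (x <= c).
Proof. rewrite /kap => Hc; case: ifP => Hx //; apply/idP/idP; lia. Qed.
Lemma kapG c x : c <= 5 -> (c <= kap x) = (c <= x).
Proof. rewrite /kap => Hc; case: ifP => Hx //; apply/idP/idP; lia. Qed.
Lemma kap12 x : kap x = 12 -> (12 %| x) && (0 < x).
Proof. rewrite /kap; case: ifP => Hx H; apply/andP; split; lia. Qed.
Lemma kap_rng x : 0 < x -> kap x \in iota 1 17.
Proof. rewrite mem_iota /kap; case: ifP => Hx H; apply/andP; split; lia. Qed.
Definition pick (l : seq nat) (p : seq nat) := [seq nth 0 l i | i <- p].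
Definition cM4 (l : seq nat) := if l is [:: a; b; c; e] then [&& 2 %| b, 3 %| c & 4 %| e] else false.
Definition cQ4 (l : seq nat) := if l is [:: a; b; c; e] then [&& 2 %| b, 12 %| e, 3 <= c & c != 5] else false.
Definition cP4 (l : seq nat) := if l is [:: a; b; c; e] then [&& ~~ (2 %| b), 3 <= b, 2 %| c, c != 2 & 12 %| e] else false.
Definition cR4 (l : seq nat) := if l is [:: a; b; c; e] then [&& ~~ (2 %| b), 3 <= b, 6 %| c & 4 %| e] else false.
Definition perms4 := permutations (iota 0 4).
Definition cert4 l := has (fun p => let l' := pick l p in [|| cM4 l', cQ4 l', cP4 l' | cR4 l']) perms4.
Definition exc4 l := has (fun p => pick l p \in [:: [:: 1;2;5;12]; [:: 2;2;5;12]; [:: 5;2;5;12]]) perms4.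
Definition pb4 (l : seq nat) := [&& 2 <= count (dvdn 2) l, 1 <= count (dvdn 3) l, 1 <= count (dvdn 4) l,
   count (fun x => x <= 1) l <= 1, count (fun x => x <= 2) l <= 2 & count (fun x => x <= 3) l <= 3].
Definition R17 := iota 1 17.
Definition check4 := all (fun a => all (fun b => all (fun c => all (fun e =>
   let l := [:: a; b; c; e] in if pb4 l then exc4 l || cert4 l else true) R17) R17) R17) R17.
Lemma check4_ok : check4 = true. Proof. vm_compute. reflexivity. Qed.
Definition cM3 (l : seq nat) := if l is [:: a; b; c] then (2 %| b) && (3 %| c) else false.
Definition cP3 (l : seq nat) := if l is [:: a; b; c] then [&& ~~ (2 %| b), 3 <= b & 6 %| c] else false.
Definition perms3 := permutations (iota 0 3).
Definition cert3 l := has (fun p => let l' := pick l p in cM3 l' || cP3 l') perms3.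
Definition pb3 (l : seq nat) := [&& 1 <= count (dvdn 2) l, 1 <= count (dvdn 3) l,
   count (fun x => x <= 1) l <= 1 & count (fun x => x <= 2) l <= 2].
Definition check3 := all (fun a => all (fun b => all (fun c =>
   let l := [:: a; b; c] in if pb3 l then cert3 l else true) R17) R17) R17.
Lemma check3_ok : check3 = true. Proof. vm_compute. reflexivity. Qed.

Lemma pick_map l p : pick (map kap l) p = map kap (pick l p).
Proof.
rewrite /pick -map_comp; apply: eq_map => i /=.
case: (ltnP i (size l)) => H; first by rewrite (nth_map 0).
by rewrite !nth_default ?size_map.
Qed.

Lemma pick_perm l p : perm_eq p (iota 0 (size l)) -> perm_eq (pick l p) l.
Proof.
move=> Hp; have := perm_map (nth 0 l) Hp.
by rewrite -/(mkseq _ _) mkseq_nth.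
Qed.

Lemma size_pick l p : size (pick l p) = size p.
Proof. by rewrite size_map. Qed.

Lemma rep34 c : 3 <= c -> c != 5 -> exists x y, c = 3 * x + 4 * y /\ 0 < x + y.
Proof.
move=> c3 c5.
have : c %% 3 = 0 \/ c %% 3 = 1 \/ c %% 3 = 2 by lia.
case=> [H|[H|H]].
- by exists (c %/ 3), 0; lia.
- by exists ((c - 4) %/ 3), 1; lia.
- by exists ((c - 8) %/ 3), 2; lia.
Qed.

Lemma pick4 (a b c e : nat) p : p \in perms4 -> 0 < a -> 0 < b -> 0 < c -> 0 < e ->
  exists a' b' c' e', [/\ pick [:: a; b; c; e] p = [:: a'; b'; c'; e'],
     perm_eq [:: a; b; c; e] [:: a'; b'; c'; e'] & [/\ 0 < a', 0 < b', 0 < c' & 0 < e']].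
Proof.
rewrite mem_permutations => Hp a0 b0 c0 e0.
have Hpe := @pick_perm [:: a; b; c; e] p Hp.
have Hall : all (fun x => 0 < x) (pick [:: a; b; c; e] p).
  by rewrite (perm_all _ Hpe) /= a0 b0 c0 e0.
have Hsz : size (pick [:: a; b; c; e] p) = 4 by rewrite size_pick (perm_size Hp).
move: Hpe Hall Hsz; case: (pick _ _) => [|a' [|b' [|c' [|e' [|]]]]] //= Hpe.
move=> /and5P [h1 h2 h3 h4 _] _; exists a', b', c', e'; split => //.
by rewrite perm_sym.
Qed.

Lemma pick3 (a b c : nat) p : p \in perms3 -> 0 < a -> 0 < b -> 0 < c ->
  exists a' b' c', [/\ pick [:: a; b; c] p = [:: a'; b'; c'],
     perm_eq [:: a; b; c] [:: a'; b'; c'] & [/\ 0 < a', 0 < b' & 0 < c']].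
Proof.
rewrite mem_permutations => Hp a0 b0 c0.
have Hpe := @pick_perm [:: a; b; c] p Hp.
have Hall : all (fun x => 0 < x) (pick [:: a; b; c] p).
  by rewrite (perm_all _ Hpe) /= a0 b0 c0.
have Hsz : size (pick [:: a; b; c] p) = 3 by rewrite size_pick (perm_size Hp).
move: Hpe Hall Hsz; case: (pick _ _) => [|a' [|b' [|c' [|]]]] //= Hpe.
move=> /and4P [h1 h2 h3 _] _; exists a', b', c'; split => //.
by rewrite perm_sym.
Qed.

Lemma odd_rep b : ~~ (2 %| b) -> 3 <= b -> b = 2 * ((b - 3) %/ 2) + 3.
Proof. move=> H1 H2; lia. Qed.

Lemma fam4 l : all (fun x => 0 < x) l -> [|| cM4 (map kap l), cQ4 (map kap l), cP4 (map kap l) | cR4 (map kap l)] ->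
  regular_degree_seq 4 l.
Proof.
case: l => [|a [|b [|c [|e [|]]]]] //= /and5P [a0 b0 c0 e0 _].
rewrite /cM4 /cQ4 /cP4 /cR4 !kapD ?kapG ?kapE // ?inE //.
case/or4P.
- by case/and3P => *; apply: famM4.
- case/and4P => b2 e12 c3 c5; have [x [y [-> xy]]] := rep34 c3 c5.
  by apply: famQ4.
- case/and5P => b2 b3 c2 cn2 e12.
  have c3 : 3 <= c by lia.
  have c5 : c != 5 by apply/eqP => H; move: c2; rewrite H.
  rewrite (odd_rep b2 b3); have [x [y [Hc xy]]] := rep34 c3 c5.
  by rewrite Hc; apply: famP4 => //; rewrite -Hc.
- case/and4P => b2 b3 c6 e4; rewrite (odd_rep b2 b3).
  by apply: famR4.
Qed.

Lemma suff4 d : size d = 4 -> all (fun x => 0 < x) d -> permissible 4 d -> ~ exceptional4 d ->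
  regular_degree_seq 4 d.
Proof.
case: d => [|a [|b [|c [|e [|]]]]] //= _ /and5P [a0 b0 c0 e0 _] [Hst Hdg] Hne.
have Hpb : pb4 [:: kap a; kap b; kap c; kap e].
  have := Hst 2 isT; have := Hst 3 isT; have := Hst 4 isT.
  have := Hdg 1 isT; have := Hdg 2 isT; have := Hdg 3 isT.
  rewrite /pb4 /= !kapD ?kapL // ?inE //.
  by move=> -> -> -> -> -> ->.
have := check4_ok; rewrite /check4.
move=> /allP /(_ _ (kap_rng a0)) /allP /(_ _ (kap_rng b0)) /allP /(_ _ (kap_rng c0)).
move=> /allP /(_ _ (kap_rng e0)); rewrite Hpb.
case/orP => /hasP [p Hp Hc].
- exfalso; apply: Hne.
  have [a' [b' [c' [e' [Hpk Hperm [a1 b1 c1 e1]]]]]] := pick4 Hp a0 b0 c0 e0.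
  move: Hc; rewrite (_ : [:: kap a; kap b; kap c; kap e] = map kap [:: a; b; c; e]) //.
  rewrite pick_map Hpk /= !inE.
  have E12 : kap e' = 12 -> exists2 dl, 0 < dl & e' = 12 * dl.
    move/kap12 => /andP [H1 H2]; exists (e' %/ 12); lia.
  case/or3P => /eqP [Ha Hb Hc He]; have [dl dl0 Hdl] := E12 He; exists dl; split => //;
    move/eqP: Ha; move/eqP: Hb; move/eqP: Hc; rewrite !kapE // => /eqP Hc /eqP Hb /eqP Ha;
    [left | right; left | right; right]; apply: (perm_trans Hperm); by rewrite Ha Hb Hc Hdl.
- have [a' [b' [c' [e' [Hpk Hperm [a1 b1 c1 e1]]]]]] := pick4 Hp a0 b0 c0 e0.
  apply: (@regular_perm 4 [:: a'; b'; c'; e']) => //.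
  apply: fam4; first by rewrite /= a1 b1 c1 e1.
  move: Hc; rewrite (_ : [:: kap a; kap b; kap c; kap e] = map kap [:: a; b; c; e]) //.
  by rewrite pick_map Hpk.
Qed.

Lemma fam3 l : all (fun x => 0 < x) l -> cM3 (map kap l) || cP3 (map kap l) ->
  regular_degree_seq 3 l.
Proof.
case: l => [|a [|b [|c [|]]]] //= /and4P [a0 b0 c0 _].
rewrite /cM3 /cP3 !kapD ?kapG // ?inE //.
case/orP.
- by case/andP => *; apply: famM3.
- case/and3P => b2 b3 c6; rewrite (odd_rep b2 b3).
  by apply: famP3.
Qed.

Lemma suff3 d : size d = 3 -> all (fun x => 0 < x) d -> permissible 3 d ->
  regular_degree_seq 3 d.
Proof.
case: d => [|a [|b [|c [|]]]] //= _ /and4P [a0 b0 c0 _] [Hst Hdg].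
have Hpb : pb3 [:: kap a; kap b; kap c].
  have := Hst 2 isT; have := Hst 3 isT.
  have := Hdg 1 isT; have := Hdg 2 isT.
  rewrite /pb3 /= !kapD ?kapL // ?inE //.
  by move=> -> -> -> ->.
have := check3_ok; rewrite /check3.
move=> /allP /(_ _ (kap_rng a0)) /allP /(_ _ (kap_rng b0)) /allP /(_ _ (kap_rng c0)).
rewrite Hpb => /hasP [p Hp Hc].
have [a' [b' [c' [Hpk Hperm [a1 b1 c1]]]]] := pick3 Hp a0 b0 c0.
apply: (@regular_perm 3 [:: a'; b'; c']) => //.
apply: fam3; first by rewrite /= a1 b1 c1.
move: Hc; rewrite (_ : [:: kap a; kap b; kap c] = map kap [:: a; b; c]) //.
by rewrite pick_map Hpk.
Qed.

Lemma nec3 a b c : 0 < a -> 0 < b -> 0 < c -> regular_degree_seq 3 [:: a; b; c] ->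
  permissible 3 [:: a; b; c].
Proof.
move=> a0 b0 c0 Hr.
have ev2 : (2 %| a) || (2 %| b) || (2 %| c).
  apply/negP => /negP; rewrite !negb_or => /andP [/andP [h1 h2] h3].
  by apply: (noeven3 _ Hr); apply: forall3.
have ev3 : (3 %| a) || (3 %| b) || (3 %| c).
  apply/negP => /negP; rewrite !negb_or => /andP [/andP [h1 h2] h3].
  by apply: (nothree3 _ Hr); apply: forall3.
split => i /andP [i1 i3].
- have : i = 1 \/ i = 2 \/ i = 3 by lia.
  case=> [->|[->|->]] /=; rewrite ?dvd1n //; move: ev2 ev3;
  case: (2 %| a); case: (2 %| b); case: (2 %| c);
  case: (3 %| a); case: (3 %| b); case: (3 %| c) => //.
- have : i = 1 \/ i = 2 \/ i = 3 by lia.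
  case=> [->|[->|->]] /=; last by lia.
  + case: (leqP ((a <= 1) + ((b <= 1) + ((c <= 1) + 0))) 1) => // H; exfalso.
    have : (a = 1 /\ b = 1) \/ (a = 1 /\ c = 1) \/ (b = 1 /\ c = 1) by lia.
    case=> [[Ha Hb]|[[Ha Hc]|[Hb Hc]]].
    * apply: (ones3 (j0 := P2)) Hr => //; apply: forall3 => //; by rewrite eqxx.
    * apply: (ones3 (j0 := P1)) Hr => //; apply: forall3 => //; by rewrite eqxx.
    * apply: (ones3 (j0 := P0)) Hr => //; apply: forall3 => //; by rewrite eqxx.
  + case: (leqP ((a <= 2) + ((b <= 2) + ((c <= 2) + 0))) 2) => // H; exfalso.
    have [Ha [Hb Hc]] : a <= 2 /\ b <= 2 /\ c <= 2 by lia.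
    apply: (nothree3 _ Hr); apply: forall3 => /=; lia.
Qed.

Lemma perm2 (a b : nat) : perm_eq [:: a; b] [:: b; a].
Proof. by rewrite (perm_catC [:: a] [:: b]). Qed.

Theorem theorem2p5 :
  (* (1) n = 2 *)
  (forall d : seq nat, size d = 2 -> all (fun x => 0 < x) d ->
     (regular_degree_seq 2 d <-> permissible 2 d) /\
     (permissible 2 d <-> cond_star 2 d)) /\
  (* (2) n = 3 *)
  (forall d : seq nat, size d = 3 -> all (fun x => 0 < x) d ->
     (regular_degree_seq 3 d <-> permissible 3 d)) /\
  (* (3) n = 4 *)
  (forall d : seq nat, size d = 4 -> all (fun x => 0 < x) d ->
     (permissible 4 d -> ~ exceptional4 d -> regular_degree_seq 4 d) /\
     (exceptional4 d -> ~ regular_degree_seq 4 d)).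
Proof.
split; [|split].
- case=> [|a [|b [|]]] //= _ /and3P [a0 b0 _].
  have stE : cond_star 2 [:: a; b] <-> (2 %| a) || (2 %| b).
    split.
    + move=> /(_ 2 isT) /=; case: (2 %| a); case: (2 %| b) => //.
    + move=> H i /andP [i1 i2]; have : i = 1 \/ i = 2 by lia.
      by case=> ->; rewrite /= ?dvd1n //; move: H; case: (2 %| a); case: (2 %| b).
  have dgE : (2 %| a) || (2 %| b) -> cond_dagger 2 [:: a; b].
    move=> H i /andP [i1 i2]; have : i = 1 \/ i = 2 by lia.
    case=> -> /=; last by lia.
    case: (leqP ((a <= 1) + ((b <= 1) + 0)) 1) => // Hc; exfalso.
    have [Ha Hb] : a = 1 /\ b = 1 by lia.
    by move: H; rewrite Ha Hb.
  have regE : regular_degree_seq 2 [:: a; b] <-> (2 %| a) || (2 %| b).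
    split.
    + move=> Hr; apply/negP => /negP; rewrite negb_or => /andP [h1 h2].
      by apply: (noeven2 _ Hr); apply: forall2.
    + case/orP => H; last by apply: famM2.
      apply: (@regular_perm 2 [:: b; a]) => //; first exact: perm2.
      exact: (famM2 b0 a0 H).
  split; split.
  + by move/regE => H; split; [apply/stE | apply: dgE].
  + by case=> /stE /regE.
  + by case.
  + by move=> H; split => //; apply: dgE; apply/stE.
- move=> d Hs Hp; split; last exact: suff3.
  by case: d Hs Hp => [|a [|b [|c [|]]]] //= _ /and4P [a0 b0 c0 _]; apply: nec3.
- move=> d Hs Hp; split; first exact: suff4.
  case=> dl [dl0 Hperm] Hr.
  have reg (x : nat) : perm_eq d [:: x; 2; 5; 12 * dl] -> [|| x == 1, x == 2 | x == 5] -> False.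
    move=> Hq Hx; apply: (@exc_notreg x (12 * dl)) => //; first by rewrite dvdn_mulr.
    - by rewrite muln_gt0.
    - by apply: (regular_perm Hs) Hr; rewrite perm_sym.
  by case: Hperm => [H|[H|H]]; apply: (reg _ H).
Qed.
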